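(* Let $\mathbb{F}$ be a field of characteristic $p$ ($p=0$ or prime) and let $f\in\mathbb{F}[X]$ have degree at least $2$. Suppose $f$ is not a monomial and is not a binomial of the form $aX^{p^{\ell}}+b$ with $a\in\mathbb{F}\setminus\{0\}$, $b\in\mathbb{F}$, $\ell\ge1$ (the latter exclusion only relevant when $p>0$). Then $f^{(k)}$ is not a monomial for any $k\ge1$.
   Context: Iterates: $f^{(0)}=X$, $f^{(k)}=f\circ f^{(k-1)}$. A monomial means a polynomial of the form $cX^m$ with $c\in\mathbb{F}$. *)

(* Defs.v *)
From HB Require Import structures.
From mathcomp Require Import all_boot all_order all_algebra.
Set Implicit Arguments. Unset Strict Implicit. Unset Printing Implicit Defensive.
Import GRing.Theory.
Local Open Scope ring_scope.

Definition poly_iter (F : fieldType) (f : {poly F}) (k : nat) : {poly F} :=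
  iter k (fun g => f \Po g) 'X.

(* a monomial is c X^m with c in F (c = 0 allowed) *)
Definition is_monomial (F : fieldType) (g : {poly F}) : Prop :=
  exists (c : F) (m : nat), g = c *: 'X^m.

(* Main.v *)
From HB Require Import structures.
Require Import Defs.
From mathcomp Require Import all_boot all_order all_algebra zify.
Set Implicit Arguments. Unset Strict Implicit. Unset Printing Implicit Defensive.
Import GRing.Theory.
Local Open Scope ring_scope.

Section S.
Variable F : fieldType.
Implicit Types p q g h : {poly F}.

Lemma low_split p : p != 0 -> exists j q, p = 'X^j * q /\ q.[0] != 0.
Proof.
move: {2}(size p) (leqnn (size p)) => n; elim: n p => [|n IH] p Hs Hp.
  by move: Hp; rewrite -size_poly_eq0; move: Hs; rewrite leqn0 => ->.
have [H0|H0] := eqVneq p.[0] 0; last by exists 0%N, p; rewrite expr0 mul1r.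
have /factor_theorem [q Hq] : root p 0 by apply/eqP.
move: Hq; rewrite subr0 => Hq.
have qn0 : q != 0 by apply: contraNneq Hp => q0; rewrite Hq q0 mul0r.
have : (size q <= n)%N.
  by move: Hs; rewrite Hq size_mulX.
move=> /(IH q)/(_ qn0) [j [r [Eq Hr]]].
 by exists j.+1, r; split => //; rewrite Hq Eq exprSr mulrAC.
Qed.

Lemma compA_mono h g c m : g.[0] = 0 -> (1 < size g)%N -> (1 < size h)%N ->
  h \Po g = c *: 'X^m -> (exists a j, g = a *: 'X^j) /\ (exists b n, h = b *: 'X^n).
Proof.
move=> g0 sg sh E.
have gn0 : g != 0 by rewrite -size_poly_eq0 -lt0n ltnW.
have hn0 : h != 0 by rewrite -size_poly_eq0 -lt0n ltnW.
have [j [g1 [Eg Hg1]]] := low_split gn0.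
have [i [h1 [Eh Hh1]]] := low_split hn0.
set q := g1 ^+ i * (h1 \Po g).
have Eq : h \Po g = 'X^(j * i) * q.
  by rewrite {1}Eh comp_polyM comp_Xn_poly {1}Eg exprMn -exprM mulrA.
have q0 : q.[0] != 0.
  by rewrite /q hornerM horner_comp g0 horner_exp mulf_neq0 // expf_neq0.
have Ec := congr1 (fun p => p`_(j * i)) E.
move: Ec; rewrite /= Eq coefXnM ltnn subnn -horner_coef0 coefZ coefXn => Ec.
have Hm : (j * i)%N = m.
  by apply/eqP; apply: contraNT q0 => /negbTE Hne; rewrite Ec Hne mulr0.
move: Ec; rewrite Hm eqxx mulr1 => Ec.
have Eqc : q = c%:P.
  apply: (@mulfI _ ('X^m)); first by rewrite monic_neq0 // monicXn.
  by rewrite -Hm -Eq E -Hm mulrC mul_polyC.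
have : size q == 1%N by rewrite Eqc size_polyC -Ec q0.
rewrite /q size_mul_eq1 => /andP [s1 s2].
have h1n0 : h1 != 0 by apply: contraNneq Hh1 => ->; rewrite horner0.
have g1n0 : g1 != 0 by apply: contraNneq Hg1 => ->; rewrite horner0.
have sh1 : size h1 = 1%N.
  have := size_comp_poly h1 g; rewrite (eqP s2) /=.
  have := size_poly_gt0 h1; rewrite h1n0.
  move: sg; case: (size g) => [|[|k]] //= _; case: (size h1) => [|[|l]] //=.
have i1 : (0 < i)%N.
  move: sh; rewrite Eh mulrC size_mulXn // sh1. lia.
have sg1 : size g1 = 1%N.
  have := size_exp g1 i; rewrite (eqP s1) /=.
  have := size_poly_gt0 g1; rewrite g1n0.
  move=> A B; have : ((size g1).-1 * i == 0)%N by rewrite -B.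
  rewrite muln_eq0 => /orP [|/eqP i0]; last by rewrite i0 in i1.
  by move: A; case: (size g1) => [|[|l]].
split; first exists (g1`_0), j.
  by rewrite Eg {1}(size1_polyC (eq_leq sg1)) mulrC mul_polyC.
exists (h1`_0), i.
by rewrite Eh {1}(size1_polyC (eq_leq sh1)) mulrC mul_polyC.
Qed.

Lemma comp_exp q r n : (q ^+ n) \Po r = (q \Po r) ^+ n.
Proof. by elim: n => [|n IH]; rewrite ?expr0 ?comp_polyC // !exprS comp_polyM IH. Qed.

Lemma binom_const d (s e : F) : s != 0 -> (0 < d)%N ->
  ('X + s%:P) ^+ d = 'X^d + e%:P ->
  d = 1%N \/ exists (c : nat) l, c \in [pchar F] /\ (1 <= l)%N /\ d = (c ^ l)%N.
Proof.
elim/ltn_ind: d s e => d IH s e s0 d0 E.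
have D := congr1 deriv E.
rewrite deriv_exp derivD derivC derivX addr0 mul1r in D.
rewrite derivD derivC addr0 derivXn in D.
have [Hd|Hd] := eqVneq (d%:R : F) 0; last first.
  have D0 := congr1 (fun p => p.[0]) D.
  move: D0; rewrite /= !hornerMn horner_exp hornerD hornerX hornerC add0r hornerXn.
  rewrite -(mulr_natr (s ^+ d.-1)) -(mulr_natr (0 ^+ d.-1)) => /(mulIf Hd) D0.
  have [->|d1] := eqVneq d 1%N; first by left.
  have dn : (d.-1 == 0)%N = false by move: d0 d1; clear; case: d => [|[|k]].
  move: D0; rewrite expr0n dn => /eqP; rewrite expf_eq0 (negbTE s0) andbF.
  done.
right.
have [c cp] := natf0_pchar d0 (introT eqP Hd).
have cd : (c %| d)%N by rewrite (dvdn_pcharf cp) Hd eqxx.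
have pp := pcharf_prime cp.
have c1 := prime_gt1 pp.
have cpP : c \in [pchar {poly F}] := rmorph_pchar (@polyC F) cp.
set d' := (d %/ c)%N.
have Ed : d = (c * d')%N by rewrite mulnC divnK.
have d'0 : (0 < d')%N by move: d0; rewrite Ed muln_gt0 => /andP [].
have d'd : (d' < d)%N by rewrite Ed -{1}(mul1n d') ltn_mul2r d'0.
have Fr : ('X + s%:P) ^+ c = 'X^c + (s ^+ c)%:P.
  rewrite (rmorphXn (@polyC F)) -!(pFrobenius_autE cpP) pFrobenius_autD_comm //; exact: commr_sym (commr_polyX _).
have E' : ('X + (s ^+ c)%:P) ^+ d' = 'X^d' + e%:P.
  apply/eqP; rewrite -subr_eq0 -(comp_poly_eq0 _ (q := 'X^c)); last by rewrite size_polyXn ltnS ltnW.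
  rewrite comp_polyB comp_exp comp_polyD comp_polyX comp_polyC comp_polyD comp_Xn_poly comp_polyC.
  by rewrite -Fr -exprM -Ed E -exprM -Ed subrr.
have [H1|[c' [l [cp' [l1 H2]]]]] := IH d' d'd (s ^+ c) e (expf_neq0 _ s0) d'0 E'.
  by exists c, 1%N; rewrite Ed H1 muln1 expn1.
exists c, l.+1; split => //; split => //.
rewrite Ed H2; move: cp'; rewrite (pcharf_eq cp) inE => /eqP ->.
by rewrite expnS.
Qed.
End S.

Lemma iterS_r (F : fieldType) (f : {poly F}) k : poly_iter f k.+1 = poly_iter f k \Po f.
Proof.
elim: k => [|k IH]; first by rewrite /poly_iter /= comp_polyX comp_polyXr.
rewrite (_ : poly_iter f k.+2 = f \Po poly_iter f k.+1) // {1}IH comp_polyA.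
by [].

Qed.

Lemma size_iter (F : fieldType) (f : {poly F}) k :
  (size (poly_iter f k)).-1 = ((size f).-1 ^ k)%N.
Proof.
elim: k => [|k IH]; first by rewrite /poly_iter /= size_polyX.
rewrite (_ : poly_iter f k.+1 = f \Po poly_iter f k) // size_comp_poly IH expnS.
by [].

Qed.

Unset Implicit Arguments.
Set Strict Implicit.

Theorem lemma10 (F : fieldType) (f : {poly F}) :
  (2 < size f)%N ->
  ~ is_monomial f ->
  ~ (exists (p : nat) (a b : F) (l : nat),
        p \in [pchar F] /\ a != 0 /\ (1 <= l)%N /\
        f = a *: 'X^(p ^ l) + b%:P) ->
  forall k : nat, (1 <= k)%N -> ~ is_monomial (poly_iter f k).
Proof.
move=> sf nm nb k k1 [c [m E]].
case: k k1 E => [//|k] _ E.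
set g := poly_iter f k.
have sg : (1 < size g)%N.
  have := size_iter f k; rewrite -/g.
  have : (0 < (size f).-1 ^ k)%N by rewrite expn_gt0; apply/orP; left; move: sf; case: (size f) => [|[|]].
  move=> H1 H2; move: H1; rewrite -H2; case: (size g) => [|[|n]] //.
set t := f`_0.
set f1 := f - t%:P.
have sf1 : size f1 = size f.
  rewrite /f1 size_polyDl // size_polyN (leq_ltn_trans (size_polyC_leq1 t)) //.
  by apply: ltn_trans sf.
have hA : (g \Po ('X + t%:P)) \Po f1 = c *: 'X^m.
  by rewrite -comp_polyA comp_polyD comp_polyX comp_polyC subrK -iterS_r.
have f10 : f1.[0] = 0 by rewrite hornerD hornerN hornerC horner_coef0 subrr.
have X1 : (1 < size f1)%N by rewrite sf1; apply: ltn_trans sf.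
have X2 : (1 < size (g \Po ('X + t%:P)))%N by rewrite size_comp_poly2 ?size_XaddC.
have [[a [j Ef1]] _] := compA_mono f10 X1 X2 hA.
have Ef : f = a *: 'X^j + t%:P by rewrite -Ef1 subrK.
have t0 : t != 0.
  by apply/eqP => t0; apply: nm; exists a, j; rewrite Ef t0 addr0.
have a0 : a != 0.
  apply: contraTneq sf => a0; rewrite -sf1 Ef1 a0 scale0r size_poly0 //.
have sj : size f = j.+1 by rewrite -sf1 Ef1 size_scale // size_polyXn.
have j2 : (2 <= j)%N by move: sf; rewrite sj.
set s := g`_0.
set g1 := g - s%:P.
have sg1 : size g1 = size g.
  by rewrite /g1 size_polyDl // size_polyN (leq_ltn_trans (size_polyC_leq1 s)).
have hB : (f \Po ('X + s%:P)) \Po g1 = c *: 'X^m.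
  by rewrite -comp_polyA comp_polyD comp_polyX comp_polyC subrK -E.
have g10 : g1.[0] = 0 by rewrite hornerD hornerN hornerC horner_coef0 subrr.
have X3 : (1 < size g1)%N by rewrite sg1.
have X4 : (1 < size (f \Po ('X + s%:P)))%N.
  by rewrite size_comp_poly2 ?size_XaddC //; apply: ltn_trans sf.
have [_ [b [n Ef2]]] := compA_mono g10 X3 X4 hB.
move: Ef2; rewrite {1}Ef comp_polyD comp_polyZ comp_Xn_poly comp_polyC => Ef2.
have lc : (('X + s%:P) ^+ j)`_j = 1.
  have := size_exp ('X + s%:P) j; rewrite size_XaddC mul1n => Hs.
  have : lead_coef (('X + s%:P) ^+ j) = 1 by rewrite lead_coef_exp lead_coefXaddC expr1n.
  rewrite lead_coefE Hs //.
have Ecj : (a *: ('X + s%:P) ^+ j + t%:P)`_j = (b *: 'X^n)`_j by rewrite Ef2.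
move: Ecj; rewrite coefD coefZ coefC lc mulr1 coefZ coefXn.
have -> : (j == 0)%N = false by case: j j2 {Ef1 Ef sj lc Ef2 hA}.
rewrite addr0.
have [Hn|Hn] := eqVneq j n; last by rewrite mulr0 => /eqP; rewrite (negbTE a0).
rewrite mulr1 => Hab; move: Ef2; rewrite -Hab -Hn => Ef2.
have [s0|s0] := eqVneq s 0.
  move: Ef2; rewrite s0 addr0 => /(canRL (addKr _)); rewrite addNr => /eqP.
  by rewrite polyC_eq0 (negbTE t0).
have E3 : ('X + s%:P) ^+ j = 'X^j + (- t / a)%:P.
  apply: (scalerI a0); rewrite scalerDr scale_polyC mulrC divfK //.
  by rewrite polyCN -Ef2 addrK.
have [j1|[q [l [cq [l1 Hj]]]]] := binom_const s0 (ltnW j2) E3.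
  by rewrite j1 in j2.
by apply: nb; exists q, a, t, l; rewrite -Hj.
Qed.
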